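(* Let $(Y,\lambda)\in\{-1,1\}\times\{-1,1\}^m$ follow the Ising model $$P(Y,\lambda)=\frac1Z\exp\Big(\theta_Y Y+\sum_i\theta_i\lambda_iY+\sum_{(i,j)\in E_\lambda}\theta_{ij}\lambda_i\lambda_j\Big),$$ where $E_\lambda$ is a set of unordered pairs of distinct sources. Then for every source $i$, with $a_i=\mathbb E[\lambda_iY]$, $$P(\lambda_i=1\mid Y=1)=P(\lambda_i=-1\mid Y=-1)=\frac{1+a_i}{2},\qquad P(\lambda_i=-1\mid Y=1)=P(\lambda_i=1\mid Y=-1)=\frac{1-a_i}{2}.$$
   Context: $Z$ is the normalizing constant. *)

(* Defs.v *)
From HB Require Import structures.
From mathcomp Require Import all_boot all_order all_algebra.
From mathcomp Require Import all_classical all_reals all_analysis.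
Set Implicit Arguments. Unset Strict Implicit. Unset Printing Implicit Defensive.
Import Order.TTheory GRing.Theory Num.Theory.
Local Open Scope ring_scope.

Definition spin {R : realType} (b : bool) : R := if b then 1 else -1.

(* A configuration (Y, lambda) in {-1,1} x {-1,1}^m. *)
Definition config (m : nat) := (bool * {ffun 'I_m -> bool})%type.

Section Ising.
Variables (R : realType) (m : nat).
(* Parameters: thY = theta_Y, th i = theta_i, thE i j = theta_ij,
   E = edge set; each unordered pair {i,j} represented as (i,j) with i < j. *)
Variables (thY : R) (th : 'I_m -> R) (thE : 'I_m -> 'I_m -> R)
          (E : {set 'I_m * 'I_m}).

Definition ising_weight (c : config m) : R :=
  expR (thY * spin c.1
        + \sum_(i < m) th i * spin (c.2 i) * spin c.1
        + \sum_(e in E) thE e.1 e.2 * spin (c.2 e.1) * spin (c.2 e.2)).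

Definition ising_Z : R := \sum_(c : config m) ising_weight c.

Definition ising_P (c : config m) : R := ising_weight c / ising_Z.

Definition ising_Prob (A : pred (config m)) : R :=
  \sum_(c : config m | A c) ising_P c.

Definition cond_lam_given_Y (i : 'I_m) (b y : bool) : R :=
  ising_Prob (fun c => (c.2 i == b) && (c.1 == y)) /
  ising_Prob (fun c => c.1 == y).

Definition accuracy (i : 'I_m) : R :=
  \sum_(c : config m) ising_P c * (spin (c.2 i) * spin c.1).
End Ising.

(* Main.v *)
Require Import Defs.
From HB Require Import structures.
From mathcomp Require Import all_boot all_order all_algebra.
From mathcomp Require Import all_classical all_reals all_analysis.
From mathcomp Require Import ring.
Import Order.TTheory GRing.Theory Num.Theory.
Local Open Scope ring_scope.

Section Aux.
Variables (R : realType) (m : nat) (thY : R) (th : 'I_m -> R)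
    (thE : 'I_m -> 'I_m -> R) (E : {set 'I_m * 'I_m}) (i : 'I_m).

Lemma spinN (b : bool) : spin (~~ b) = - spin b :> R.
Proof. by case: b; rewrite /spin ?opprK. Qed.

Definition fl (l : {ffun 'I_m -> bool}) : {ffun 'I_m -> bool} := [ffun j => ~~ l j].
Lemma flK : involutive fl.
Proof. by move=> l; apply/ffunP => j; rewrite !ffunE negbK. Qed.
Lemma fl_inj : injective fl. Proof. exact: inv_inj flK. Qed.

Definition q (c : config m) : R :=
  \sum_(j < m) th j * spin (c.2 j) * spin c.1
  + \sum_(e in E) thE e.1 e.2 * spin (c.2 e.1) * spin (c.2 e.2).

Let w := ising_weight thY th thE E.

Lemma wE c : w c = expR (thY * spin c.1) * expR (q c).
Proof. by rewrite /w /ising_weight /q -expRD addrA. Qed.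

Lemma q_flip l : q (false, fl l) = q (true, l).
Proof.
have sf : spin false = -1 :> R by [].
have st : spin true = 1 :> R by [].
rewrite /q /=; congr (_ + _); apply: eq_bigr => j _; rewrite !ffunE !spinN ?sf ?st;
  ring.
Qed.

Lemma sumC (F : config m -> R) :
  \sum_(c : config m) F c = \sum_l F (true, l) + \sum_l F (false, l).
Proof.
transitivity (\sum_(y : bool) \sum_(l : {ffun 'I_m -> bool}) F (y, l)).
  by rewrite pair_bigA; apply: eq_bigr => -[].
by rewrite big_bool.
Qed.

Definition Sb y b := \sum_(l : {ffun 'I_m -> bool}) (if l i == b then w (y, l) else 0).
Definition Q b := \sum_(l : {ffun 'I_m -> bool}) (if l i == b then expR (q (true, l)) else 0).

Lemma SbT b : Sb true b = expR (thY * spin true) * Q b.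
Proof.
rewrite /Sb /Q mulr_sumr; apply: eq_bigr => l _.
by case: ifP; rewrite ?mulr0 // wE.
Qed.

Lemma SbF b : Sb false b = expR (thY * spin false) * Q (~~ b).
Proof.
rewrite /Sb /Q (reindex_inj fl_inj) mulr_sumr; apply: eq_bigr => l _.
rewrite ffunE wE q_flip.
by case: (l i); case: b => /=; rewrite ?mulr0.
Qed.

Lemma sum_split (G : {ffun 'I_m -> bool} -> R) :
  \sum_l G l = \sum_(l : {ffun 'I_m -> bool}) (if l i == true then G l else 0)
             + \sum_(l : {ffun 'I_m -> bool}) (if l i == false then G l else 0).
Proof.
rewrite -big_split; apply: eq_bigr => l _; case: (l i) => /=.
  by rewrite addr0. by rewrite add0r.
Qed.

Lemma sum_spin (G : {ffun 'I_m -> bool} -> R) :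
  \sum_l G l * spin (l i) = \sum_(l : {ffun 'I_m -> bool}) (if l i == true then G l else 0)
             - \sum_(l : {ffun 'I_m -> bool}) (if l i == false then G l else 0).
Proof.
rewrite -sumrB; apply: eq_bigr => l _; case: (l i) => /=; rewrite /spin.
  by rewrite subr0 mulr1. by rewrite sub0r mulrN1.
Qed.

Lemma Q_gt0 b : 0 < Q b.
Proof.
rewrite /Q (bigD1 [ffun => b]) //= ffunE eqxx.
rewrite ltr_pwDl ?expR_gt0 // sumr_ge0 // => l _.
by case: ifP => // _; rewrite ltW ?expR_gt0.
Qed.

Lemma Z_eq : ising_Z thY th thE E =
  Sb true true + Sb true false + Sb false true + Sb false false.
Proof.
by rewrite /ising_Z sumC (sum_split (fun l => w (true, l)))
  (sum_split (fun l => w (false, l))) !addrA.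
Qed.

Lemma Prob_eq b y : ising_Prob thY th thE E (fun c => (c.2 i == b) && (c.1 == y))
  = Sb y b / ising_Z thY th thE E.
Proof.
rewrite /ising_Prob big_mkcond sumC /Sb mulr_suml.
case: y.
  rewrite [X in _ + X]big1 ?addr0 => [|l _]; last by rewrite /= andbF.
  by apply: eq_bigr => l _; rewrite /= andbT; case: ifP; rewrite ?mul0r.
rewrite [X in X + _]big1 ?add0r => [|l _]; last by rewrite /= andbF.
by apply: eq_bigr => l _; rewrite /= andbT; case: ifP; rewrite ?mul0r.
Qed.

Lemma ProbY y : ising_Prob thY th thE E (fun c => c.1 == y)
  = (Sb y true + Sb y false) / ising_Z thY th thE E.
Proof.
rewrite /Sb -(sum_split (fun l => w (y, l))) /ising_Prob big_mkcond sumC mulr_suml.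
have z y' : y' != y -> \sum_(l : {ffun 'I_m -> bool}) (if (y', l).1 == y
      then ising_P thY th thE E (y', l) else 0) = 0.
  by move=> ne; apply: big1 => l _; rewrite /= (negbTE ne).
have e : \sum_(l : {ffun 'I_m -> bool}) (if (y, l).1 == y
      then ising_P thY th thE E (y, l) else 0) =
      \sum_(l : {ffun 'I_m -> bool}) w (y, l) / ising_Z thY th thE E.
  by apply: eq_bigr => l _; rewrite /= eqxx.
by case: y z e => z e; [rewrite e (z false) // addr0 | rewrite e (z true) // add0r].
Qed.

Lemma acc_eq : accuracy thY th thE E i =
  (Sb true true - Sb true false - Sb false true + Sb false false)
   / ising_Z thY th thE E.
Proof.
rewrite /accuracy sumC /=.
have h y : \sum_l ising_P thY th thE E (y, l) * (spin (l i) * spin y)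
   = spin y / ising_Z thY th thE E * \sum_l w (y, l) * spin (l i).
  rewrite mulr_sumr; apply: eq_bigr => l _; rewrite /ising_P /w /=; ring.
rewrite !h !sum_spin -/(Sb true true) -/(Sb true false) -/(Sb false true)
  -/(Sb false false) /spin; ring.
Qed.

End Aux.

Theorem lemma2 (R : realType) (m : nat) (thY : R) (th : 'I_m -> R)
    (thE : 'I_m -> 'I_m -> R) (E : {set 'I_m * 'I_m})
    (hE : forall e, e \in E -> (e.1 < e.2)%N) (i : 'I_m) :
  let a := accuracy thY th thE E i in
  [/\ cond_lam_given_Y thY th thE E i true true = (1 + a) / 2,
      cond_lam_given_Y thY th thE E i false false = (1 + a) / 2,
      cond_lam_given_Y thY th thE E i false true = (1 - a) / 2 &
      cond_lam_given_Y thY th thE E i true false = (1 - a) / 2].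
Proof.
rewrite /= /cond_lam_given_Y !Prob_eq !(ProbY _ _ _ _ _ _ i) acc_eq (Z_eq _ _ _ _ _ _ i) !SbT !SbF /=.
have h1 := Q_gt0 _ _ th thE E i true.
have h2 := Q_gt0 _ _ th thE E i false.
set A := Q _ _ _ _ _ _ true in h1 *; set B := Q _ _ _ _ _ _ false in h2 *.
set e1 := expR (thY * spin true); set e2 := expR (thY * spin false).
have he1 : 0 < e1 by apply: expR_gt0.
have he2 : 0 < e2 by apply: expR_gt0.
have nAB : A + B != 0 by rewrite gt_eqF // addr_gt0.
have ne1 : e1 != 0 by rewrite gt_eqF.
have ne2 : e2 != 0 by rewrite gt_eqF.
have ne12 : e1 + e2 != 0 by rewrite gt_eqF // addr_gt0.
have nZ : e1 * A + e1 * B + e2 * B + e2 * A != 0.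
  by rewrite gt_eqF // !addr_gt0 // mulr_gt0.
have n1 : e1 * A + e1 * B != 0 by rewrite gt_eqF // addr_gt0 // mulr_gt0.
have n2 : e2 * B + e2 * A != 0 by rewrite gt_eqF // addr_gt0 // mulr_gt0.
have n3 : (2 : R) != 0 by rewrite pnatr_eq0.
split; field; rewrite ?n1 ?n2 ?n3 ?nAB ?ne1 ?ne2 ?ne12 ?nZ //.
Qed.
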